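(* Let $(X,d)$ be a pointed metric space and let $((x_n,y_n))_{n=1}^\infty$ be a sequence in $\widetilde X$ such that $d(x_n,y_n)\to 0$ as $n\to\infty$. Then for every $\varepsilon\in(0,1)$ there exists a subsequence $((x_{n_k},y_{n_k}))_{k=1}^\infty$ which is Lipschitz interpolating for $\mathrm{Lip}_0(X)$ and whose Lipschitz interpolation constant is at most $1/(1-\varepsilon)$.
   Context: All spaces are real. $(X,d)$ has a base point $0$, $\widetilde{X}=\{(x,y)\in X\times X: x\neq y\}$. $\mathrm{Lip}_0(X)$ is the Banach space of Lipschitz $f:X\to\mathbb{R}$ with $f(0)=0$, normed by $\|f\|=\sup_{(x,y)\in\widetilde X}|f(x)-f(y)|/d(x,y)$. A sequence $((u_k,v_k))_{k=1}^\infty$ in $\widetilde X$ is Lipschitz interpolating for $\mathrm{Lip}_0(X)$ if $T:\mathrm{Lip}_0(X)\to\ell_\infty$, $T(f)=\big((f(u_k)-f(v_k))/d(u_k,v_k)\big)_{k}$, is surjective; its Lipschitz interpolation constant is then $\inf\{K\geq 1: \forall\alpha\in\ell_\infty,\ \|\alpha\|_\infty\le 1,\ \exists f\in\mathrm{Lip}_0(X),\ \|f\|\le K,\ T(f)=\alpha\}$. *)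

(* Defs.v *)
From Stdlib Require Import Reals.
Open Scope R_scope.

Definition is_metric {X : Type} (d : X -> X -> R) : Prop :=
  (forall x y, 0 <= d x y) /\
  (forall x y, d x y = 0 <-> x = y) /\
  (forall x y, d x y = d y x) /\
  (forall x y z, d x z <= d x y + d y z).

Definition lip0 {X : Type} (d : X -> X -> R) (x0 : X) (f : X -> R) : Prop :=
  f x0 = 0 /\
  exists L : R, forall x y, x <> y -> Rabs (f x - f y) / d x y <= L.

Definition lip_norm_le {X : Type} (d : X -> X -> R) (f : X -> R) (K : R) : Prop :=
  forall x y, x <> y -> Rabs (f x - f y) / d x y <= K.

Definition Tcoord {X : Type} (d : X -> X -> R) (u v : nat -> X) (f : X -> R) (k : nat) : R :=
  (f (u k) - f (v k)) / d (u k) (v k).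

Definition bounded_seq (a : nat -> R) : Prop := exists M, forall k, Rabs (a k) <= M.

Definition lip_interpolating {X : Type} (d : X -> X -> R) (x0 : X) (u v : nat -> X) : Prop :=
  forall alpha : nat -> R, bounded_seq alpha ->
    exists f : X -> R, lip0 d x0 f /\ forall k, Tcoord d u v f k = alpha k.

Definition interp_admissible {X : Type} (d : X -> X -> R) (x0 : X) (u v : nat -> X) (K : R) : Prop :=
  1 <= K /\
  forall alpha : nat -> R, (forall k, Rabs (alpha k) <= 1) ->
    exists f : X -> R, lip0 d x0 f /\ lip_norm_le d f K /\
      forall k, Tcoord d u v f k = alpha k.

Definition is_lip_interp_const {X : Type} (d : X -> X -> R) (x0 : X) (u v : nat -> X) (c : R) : Prop :=
  (forall K, interp_admissible d x0 u v K -> c <= K) /\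
  (forall b, (forall K, interp_admissible d x0 u v K -> b <= K) -> b <= c).

(* Main.v *)
Require Import Defs.
From Stdlib Require Import Reals Lra Lia List ClassicalEpsilon Classical.
From Coquelicot Require Import Coquelicot.
Open Scope R_scope.
Lemma fold_max {A : Type} (g : A -> R) (i : R) (l : list A) :
  let t := fold_right (fun a acc => Rmax acc (g a)) i l in
  i <= t /\ (forall a, In a l -> g a <= t) /\ (t = i \/ exists a, In a l /\ t = g a).
Proof.
  induction l as [|a l IH]; simpl.
  - split; [lra|split; [tauto|auto]].
  - destruct IH as [H1 [H2 H3]].
    set (t := fold_right (fun a acc => Rmax acc (g a)) i l) in *.
    split; [|split].
    + eapply Rle_trans; [exact H1| apply Rmax_l].
    + intros b [<-|Hb]; [apply Rmax_r|]. eapply Rle_trans; [apply H2; auto|apply Rmax_l].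
    + destruct (Rle_dec t (g a)) as [h|h].
      * right. exists a. split; auto. apply Rmax_right; auto.
      * rewrite Rmax_left by lra. destruct H3 as [H3|[b [Hb Hb']]]; [left; auto| right; exists b; auto].
Qed.


Lemma absle a b : Rabs a <= b -> - b <= a <= b.
Proof. unfold Rabs; destruct (Rcase_abs a); lra. Qed.

Section Step.
Variable X : Type.
Variable d : X -> X -> R.
Hypothesis hd : is_metric d.

Lemma d_nn a b : 0 <= d a b. Proof. apply hd. Qed.
Lemma d_sym a b : d a b = d b a. Proof. apply hd. Qed.
Lemma d_tri a b c : d a c <= d a b + d b c. Proof. apply hd. Qed.
Lemma d_zero a b : d a b = 0 -> a = b. Proof. apply hd. Qed.
Lemma d_refl a : d a a = 0. Proof. apply hd; auto. Qed.

Definition lipw (L : R) (w : list (X * R)) : Prop :=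
  forall a va b vb, In (a, va) w -> In (b, vb) w -> Rabs (va - vb) <= L * d a b.

Definition sep (l : list X) (m : R) : Prop :=
  forall a b, In a l -> In b l -> 0 < d a b -> m <= d a b.

Definition gfun (L : R) (p q : X) (dl : R) (av : X * R) : R :=
  Rmax (snd av - L * d p (fst av)) (snd av - L * d q (fst av) + dl).

Definition tval (L : R) (p q : X) (dl : R) (z : X) (w : list (X * R)) : R :=
  fold_right (fun av acc => Rmax acc (gfun L p q dl av)) (0 - L * d p z) w.

Lemma lip_of (L : R) w a va b vb : lipw L w -> In (a, va) w -> In (b, vb) w ->
  va - vb <= L * d a b.
Proof. intros H Ha Hb. specialize (H _ _ _ _ Ha Hb). apply absle in H. lra. Qed.

Lemma key3 L L' m p q a va b vb dl :
  1 <= L' -> L' <= L -> 0 < m -> Rabs dl <= d p q ->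
  (L + 1) * d p q <= (L - L') * m ->
  (0 < d a b -> m <= d a b) ->
  va - vb <= L' * d a b -> (d a b = 0 -> va - vb <= 0) ->
  va - vb <= L * d p a + L * d q b + dl.
Proof.
  intros h1 h2 hm hdl hr hsep hl h0.
  pose proof (d_nn a b). pose proof (d_nn p a). pose proof (d_nn q b).
  pose proof (d_nn p q).
  apply absle in hdl.
  destruct (Rle_lt_or_eq_dec 0 (d a b) H) as [hp|he].
  - specialize (hsep hp).
    assert (T : d a b <= d p a + d p q + d q b).
    { rewrite (d_sym a b). pose proof (d_tri b q a). pose proof (d_tri q p a).
      rewrite (d_sym b q), (d_sym q p), (d_sym q a) in *. lra. }
    assert (T' : d a b <= (d p a + d q b) + d p q) by lra. clear T.
    set (S := d p a + d q b) in *.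
    assert (HS : (L - L') * m <= (L - L') * (S + d p q)) by (apply Rmult_le_compat_l; lra).
    assert (L' * d a b <= L' * (S + d p q)) by (apply Rmult_le_compat_l; lra).
    assert (E1 : L * d p a + L * d q b = L * S) by (unfold S; ring).
    rewrite E1.
    assert (E2 : (L - L') * (S + d p q) = L * S + L * d p q - L' * S - L' * d p q) by ring.
    assert (E3 : L' * (S + d p q) = L' * S + L' * d p q) by ring.
    assert (E4 : (L + 1) * d p q = L * d p q + d p q) by ring.
    lra.
  - assert (a = b) by (apply d_zero; auto). subst b.
    specialize (h0 (eq_sym he)).
    pose proof (d_tri p a q). rewrite (d_sym a q) in H3.
    nra.
Qed.

Lemma Lmono L L' u : L' <= L -> 0 <= u -> L' * u <= L * u.
Proof. intros; apply Rmult_le_compat_r; auto. Qed.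

Lemma step L L' m p q dl z w : 1 <= L' -> L' <= L -> 0 < m -> Rabs dl <= d p q ->
  (L + 1) * d p q <= (L - L') * m -> sep (map fst w) m -> lipw L' w -> In (z, 0) w ->
  lipw L ((p, tval L p q dl z w) :: (q, tval L p q dl z w - dl) :: w).
Proof.
  intros h1 h2 hm hdl hr hsep hlip hz.
  destruct (fold_max (gfun L p q dl) (0 - L * d p z) w) as [F1 [F2 F3]].
  fold (tval L p q dl z w) in F1, F2, F3.
  set (t := tval L p q dl z w) in *.
  assert (A : forall a va, In (a, va) w -> va - L * d p a <= t /\ va - L * d q a + dl <= t).
  { intros a va H. specialize (F2 _ H). unfold gfun in F2; simpl in F2.
    split; eapply Rle_trans; try exact F2; [apply Rmax_l|apply Rmax_r]. }
  assert (B : exists a va, In (a, va) w /\ (t = va - L * d p a \/ t = va - L * d q a + dl)).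
  { destruct F3 as [F3|[[a va] [Ha Ht]]].
    - exists z, 0. auto.
    - exists a, va. split; auto. unfold gfun in Ht; simpl in Ht.
      destruct (Rle_dec (va - L * d p a) (va - L * d q a + dl)) as [h|h].
      + right. rewrite Ht. apply Rmax_right; auto.
      + left. rewrite Ht. apply Rmax_left; lra. }
  assert (Hsep : forall a va b vb, In (a, va) w -> In (b, vb) w -> 0 < d a b -> m <= d a b).
  { intros a va b vb Ha Hb. apply hsep.
    - change a with (fst (a, va)). apply in_map; auto.
    - change b with (fst (b, vb)). apply in_map; auto. }
  assert (Z : forall a va b vb, In (a, va) w -> In (b, vb) w -> d a b = 0 -> va - vb <= 0).
  { intros a va b vb Ha Hb H0. pose proof (lip_of _ _ _ _ _ _ hlip Ha Hb). rewrite H0 in H. lra. }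
  assert (hdl' : Rabs (- dl) <= d q p) by (rewrite Rabs_Ropp, d_sym; auto).
  assert (hr' : (L + 1) * d q p <= (L - L') * m) by (rewrite d_sym; auto).
  assert (U : forall b vb, In (b, vb) w -> t <= vb + L * d p b /\ t - dl <= vb + L * d q b).
  { intros b vb Hb. destruct B as [a [va [Ha [Ht|Ht]]]]; rewrite Ht;
    pose proof (lip_of _ _ _ _ _ _ hlip Ha Hb) as Hab;
    pose proof (d_tri a p b); pose proof (d_tri a q b);
    pose proof (d_nn a b); pose proof (d_nn p a); pose proof (d_nn p b);
    pose proof (d_nn q a); pose proof (d_nn q b);
    rewrite (d_sym a p), (d_sym a q) in *; split.
    - pose proof (Lmono L L' (d p a + d p b) h2 ltac:(lra)). nra.
    - pose proof (key3 L L' m p q a va b vb dl h1 h2 hm hdl hr (Hsep _ _ _ _ Ha Hb)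
        Hab (Z _ _ _ _ Ha Hb)). lra.
    - pose proof (key3 L L' m q p a va b vb (- dl) h1 h2 hm hdl' hr' (Hsep _ _ _ _ Ha Hb)
        Hab (Z _ _ _ _ Ha Hb)). lra.
    - pose proof (Lmono L L' (d q a + d q b) h2 ltac:(lra)). nra. }
  assert (hL : 1 <= L) by lra.
  assert (hpq : Rabs dl <= L * d p q).
  { pose proof (d_nn p q). pose proof (Lmono L 1 (d p q) hL H). lra. }
  intros a va b vb Ha Hb.
  destruct Ha as [Ha|[Ha|Ha]]; [injection Ha; intros; subst a va|injection Ha; intros; subst a va|];
  destruct Hb as [Hb|[Hb|Hb]]; try (injection Hb; intros; subst b vb).
  - rewrite d_refl, Rminus_diag, Rabs_R0; lra.
  - replace (t - (t - dl)) with dl by ring. auto.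
  - destruct (A _ _ Hb). destruct (U _ _ Hb). apply Rabs_le; lra.
  - replace (t - dl - t) with (- dl) by ring. rewrite Rabs_Ropp, d_sym. auto.
  - rewrite d_refl, Rminus_diag, Rabs_R0; lra.
  - destruct (A _ _ Hb). destruct (U _ _ Hb). apply Rabs_le; lra.
  - destruct (A _ _ Ha). destruct (U _ _ Ha). rewrite d_sym. apply Rabs_le; lra.
  - destruct (A _ _ Ha). destruct (U _ _ Ha). rewrite d_sym. apply Rabs_le; lra.
  - pose proof (hlip _ _ _ _ Ha Hb). pose proof (Lmono L L' (d a b) h2 (d_nn a b)). lra.
Qed.
End Step.
Lemma glb_real (E : R -> Prop) (b0 s0 : R) :
  (forall s, E s -> b0 <= s) -> E s0 ->
  (forall s, E s -> real (Glb_Rbar E) <= s) /\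
  (forall b, (forall s, E s -> b <= s) -> b <= real (Glb_Rbar E)).
Proof.
  intros Hb Hs.
  destruct (Glb_Rbar_correct E) as [H1 H2].
  assert (Hfin : Rbar_le b0 (Glb_Rbar E)) by (apply H2; intros s Es; apply Hb; auto).
  assert (Hup : Rbar_le (Glb_Rbar E) s0) by (apply H1; auto).
  destruct (Glb_Rbar E) as [g| |] eqn:Hg; simpl in *; try contradiction.
  split.
  - intros s Es. specialize (H1 s Es). exact H1.
  - intros b Hbb. assert (Rbar_le b g) by (apply H2; intros s Es; apply Hbb; auto). exact H.
Qed.

Lemma div_le a b L : 0 < b -> a <= L * b -> a / b <= L.
Proof.
  intros hb h. replace L with ((L * b) / b) by (field; lra).
  unfold Rdiv. apply Rmult_le_compat_r; [left; apply Rinv_0_lt_compat; auto|auto].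
Qed.

Section Sep.
Variable X : Type.
Variable d : X -> X -> R.
Hypothesis hd : is_metric d.

Lemma sep1 a (l : list X) : exists m, 0 < m /\ forall b, In b l -> 0 < d a b -> m <= d a b.
Proof.
  induction l as [|b l IH].
  - exists 1. split; [lra|]. intros b [].
  - destruct IH as [m [hm H]].
    destruct (Rlt_dec 0 (d a b)) as [h|h].
    + exists (Rmin m (d a b)). split; [apply Rmin_pos; auto|].
      intros c [<-|Hc] hc; [apply Rmin_r|]. eapply Rle_trans; [apply Rmin_l|]. auto.
    + exists m. split; auto. intros c [<-|Hc] hc; [contradiction|auto].
Qed.

Lemma sep_exists (l : list X) : exists m, 0 < m /\ sep X d l m.
Proof.
  induction l as [|a l IH].
  - exists 1. split; [lra|]. intros a b [].
  - destruct IH as [m1 [hm1 H1]]. destruct (sep1 a l) as [m2 [hm2 H2]].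
    exists (Rmin m1 m2). split; [apply Rmin_pos; auto|].
    intros b c Hb Hc hbc. destruct Hb as [<-|Hb]; destruct Hc as [<-|Hc].
    + rewrite (d_refl X d hd) in hbc; lra.
    + eapply Rle_trans; [apply Rmin_r|]. auto.
    + rewrite (d_sym X d hd) in *. eapply Rle_trans; [apply Rmin_r|]. auto.
    + eapply Rle_trans; [apply Rmin_l|]. auto.
Qed.
End Sep.

Section Main.
Variable X : Type.
Variable d : X -> X -> R.
Hypothesis hd : is_metric d.
Variable x0 : X.
Variables x y : nat -> X.
Hypothesis hxy : forall n, x n <> y n.
Hypothesis hlim : Un_cv (fun n => d (x n) (y n)) 0.
Variable eps : R.
Hypothesis heps : 0 < eps < 1.

Definition Lf : R := 1 / (1 - eps).
Definition Lk (k : nat) : R := Lf - (Lf - 1) * (/ 2) ^ k.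

Lemma Lf_ge1 : 1 < Lf.
Proof.
  unfold Lf. apply (Rmult_lt_reg_r (1 - eps)); [lra|].
  replace (1 / (1 - eps) * (1 - eps)) with 1 by (field; lra). lra.
Qed.

Lemma pow_half_pos k : 0 < (/ 2) ^ k.
Proof. apply pow_lt. lra. Qed.
Lemma pow_half_le1 k : (/ 2) ^ k <= 1.
Proof. induction k as [|k IH]; simpl; [lra|]. pose proof (pow_half_pos k). nra. Qed.

Lemma Lk_ge1 k : 1 <= Lk k.
Proof.
  unfold Lk. pose proof Lf_ge1. pose proof (pow_half_le1 k). pose proof (pow_half_pos k).
  nra.
Qed.
Lemma Lk_le k : Lk k <= Lf.
Proof.
  unfold Lk. pose proof Lf_ge1. pose proof (pow_half_pos k). nra.
Qed.
Lemma Lk_lt k : Lk k < Lk (S k).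
Proof.
  unfold Lk. simpl. pose proof Lf_ge1. pose proof (pow_half_pos k). nra.
Qed.

Definition Good (k : nat) (l : list X) (N n : nat) : Prop :=
  (N < n)%nat /\ exists m, 0 < m /\ sep X d l m /\
     (Lk (S k) + 1) * d (x n) (y n) <= (Lk (S k) - Lk k) * m.

Lemma exists_good k l N : exists n, Good k l N n.
Proof.
  destruct (sep_exists X d hd l) as [m [hm Hs]].
  pose proof (Lk_lt k) as hl. pose proof (Lk_ge1 (S k)).
  set (eta := (Lk (S k) - Lk k) * m / (Lk (S k) + 1)).
  assert (heta : eta > 0).
  { unfold eta. apply Rdiv_lt_0_compat; [apply Rmult_lt_0_compat|]; lra. }
  destruct (hlim eta heta) as [N0 HN].
  exists (Nat.max N0 (S N)). split; [lia|]. exists m. split; [auto|split; [auto|]].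
  specialize (HN (Nat.max N0 (S N)) ltac:(lia)). unfold Rdist in HN.
  rewrite Rminus_0_r in HN. apply Rlt_le, absle in HN. destruct HN as [_ HN].
  unfold eta in HN.
  apply (Rmult_le_compat_l (Lk (S k) + 1)) in HN; [|lra].
  replace ((Lk (S k) + 1) * ((Lk (S k) - Lk k) * m / (Lk (S k) + 1))) with
     ((Lk (S k) - Lk k) * m) in HN by (field; lra). lra.
Qed.

Definition next (k : nat) (l : list X) (N : nat) : nat :=
  proj1_sig (constructive_indefinite_description _ (exists_good k l N)).

Lemma next_good k l N : Good k l N (next k l N).
Proof. unfold next. exact (proj2_sig (constructive_indefinite_description _ (exists_good k l N))). Qed.

Fixpoint stt (k : nat) : list X * nat :=
  match k with
  | O => (x0 :: nil, O)
  | S k' => let s := stt k' in let n := next k' (fst s) (snd s) in (x n :: y n :: fst s, n)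
  end.

Definition nk (k : nat) : nat := snd (stt (S k)).
Definition Pts (k : nat) : list X := fst (stt k).

Lemma Pts_S k : Pts (S k) = x (nk k) :: y (nk k) :: Pts k.
Proof. reflexivity. Qed.

Lemma nk_good k : Good k (Pts k) (snd (stt k)) (nk k).
Proof. apply next_good. Qed.

Lemma nk_mono k : (nk k < nk (S k))%nat.
Proof. destruct (nk_good (S k)) as [h _]. exact h. Qed.

Lemma r_pos n : 0 < d (x n) (y n).
Proof.
  destruct (Rle_lt_or_eq_dec 0 _ (d_nn X d hd (x n) (y n))) as [h|h]; auto.
  exfalso. apply (hxy n). apply (d_zero X d hd). auto.
Qed.

Fixpoint W (alpha : nat -> R) (k : nat) : list (X * R) :=
  match k with
  | O => (x0, 0) :: nil
  | S k' => let p := x (nk k') in let q := y (nk k') in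
            let dl := alpha k' * d p q in
            let t := tval X d (Lk k) p q dl x0 (W alpha k') in
            (p, t) :: (q, t - dl) :: W alpha k'
  end.

Lemma W_fst alpha k : map fst (W alpha k) = Pts k.
Proof.
  induction k as [|k IH]; [reflexivity|]. rewrite Pts_S. simpl. rewrite IH. reflexivity.
Qed.

Lemma W_inv alpha (ha : forall k, Rabs (alpha k) <= 1) k :
  lipw X d (Lk k) (W alpha k) /\ In (x0, 0) (W alpha k).
Proof.
  induction k as [|k [IH1 IH2]].
  - split; [|left; auto]. intros a va b vb [Ha|[]] [Hb|[]].
    injection Ha; injection Hb; intros; subst. rewrite (d_refl X d hd).
    rewrite Rminus_diag, Rabs_R0. lra.
  - split; [|right; right; auto].
    destruct (nk_good k) as [_ [m [hm [Hs Hr]]]].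
    simpl W. apply (step X d hd (Lk (S k)) (Lk k) m); auto.
    + apply Lk_ge1.
    + left; apply Lk_lt.
    + rewrite Rabs_mult. pose proof (r_pos (nk k)). rewrite (Rabs_pos_eq (d _ _)) by lra.
      specialize (ha k). pose proof (Rabs_pos (alpha k)). nra.
    + rewrite W_fst. auto.
Qed.

Lemma W_mono alpha k j e : (k <= j)%nat -> In e (W alpha k) -> In e (W alpha j).
Proof.
  intros hkj. induction hkj; auto. intros H. simpl. right; right; auto.
Qed.

Lemma W_glob alpha (ha : forall k, Rabs (alpha k) <= 1) k j a va b vb :
  In (a, va) (W alpha k) -> In (b, vb) (W alpha j) -> Rabs (va - vb) <= Lf * d a b.
Proof.
  intros Ha Hb.
  destruct (W_inv alpha ha (Nat.max k j)) as [H _].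
  pose proof (H a va b vb (W_mono alpha k (Nat.max k j) _ ltac:(lia) Ha) (W_mono alpha j (Nat.max k j) _ ltac:(lia) Hb)).
  pose proof (Lmono (Lf) (Lk (Nat.max k j)) (d a b) (Lk_le _) (d_nn X d hd a b)). lra.
Qed.

Definition Sz (alpha : nat -> R) (z : X) (s : R) : Prop :=
  exists k a va, In (a, va) (W alpha k) /\ s = va + Lf * d z a.

Definition Fext (alpha : nat -> R) (z : X) : R := real (Glb_Rbar (Sz alpha z)).

Lemma Fext_glb alpha (ha : forall k, Rabs (alpha k) <= 1) z :
  (forall s, Sz alpha z s -> Fext alpha z <= s) /\
  (forall b, (forall s, Sz alpha z s -> b <= s) -> b <= Fext alpha z).
Proof.
  apply (glb_real _ (- Lf * d z x0) (0 + Lf * d z x0)).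
  - intros s [k [a [va [Ha ->]]]].
    assert (H0 : In (x0, 0) (W alpha 0)) by (left; auto).
    pose proof (W_glob alpha ha k 0 a va x0 0 Ha H0). apply absle in H.
    pose proof (d_tri X d hd a z x0). rewrite (d_sym X d hd a z) in H1.
    pose proof Lf_ge1. pose proof (Lmono Lf 0 (d a x0) ltac:(lra) (d_nn X d hd _ _)).
    assert (Lf * d a x0 <= Lf * (d z a + d z x0)) by (apply Rmult_le_compat_l; lra).
    nra.
  - exists 0%nat, x0, 0. split; [left; auto|auto].
Qed.

Lemma Fext_val alpha (ha : forall k, Rabs (alpha k) <= 1) k a va :
  In (a, va) (W alpha k) -> Fext alpha a = va.
Proof.
  intros Ha. destruct (Fext_glb alpha ha a) as [H1 H2]. apply Rle_antisym.
  - replace va with (va + Lf * d a a) by (rewrite (d_refl X d hd); ring).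
    apply H1. exists k, a, va. auto.
  - apply H2. intros s [j [b [vb [Hb ->]]]].
    pose proof (W_glob alpha ha k j a va b vb Ha Hb). apply absle in H. lra.
Qed.

Lemma Fext_lip alpha (ha : forall k, Rabs (alpha k) <= 1) z w :
  Fext alpha z - Fext alpha w <= Lf * d z w.
Proof.
  destruct (Fext_glb alpha ha z) as [H1 _]. destruct (Fext_glb alpha ha w) as [_ H2].
  assert (Fext alpha z - Lf * d z w <= Fext alpha w); [|lra].
  apply H2. intros s [k [b [vb [Hb ->]]]].
  assert (Fext alpha z <= vb + Lf * d z b) by (apply H1; exists k, b, vb; auto).
  pose proof (d_tri X d hd z w b). pose proof Lf_ge1.
  assert (Lf * d z b <= Lf * (d z w + d w b)) by (apply Rmult_le_compat_l; lra).
  lra.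
Qed.

Lemma admissible_Lf : interp_admissible d x0 (fun k => x (nk k)) (fun k => y (nk k)) Lf.
Proof.
  split; [left; apply Lf_ge1|].
  intros alpha ha. exists (Fext alpha).
  assert (Hn : lip_norm_le d (Fext alpha) Lf).
  { intros a b hab. apply div_le.
    - destruct (Rle_lt_or_eq_dec 0 _ (d_nn X d hd a b)) as [h|h]; auto.
      exfalso. apply hab. apply (d_zero X d hd). auto.
    - pose proof (Fext_lip alpha ha a b). pose proof (Fext_lip alpha ha b a).
      rewrite (d_sym X d hd b a) in H0. apply Rabs_le. lra. }
  split; [split|split; auto].
  - apply (Fext_val alpha ha 0). left; auto.
  - exists Lf. exact Hn.
  - intros k. unfold Tcoord.
    assert (Hp : In (x (nk k), tval X d (Lk (S k)) (x (nk k)) (y (nk k))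
               (alpha k * d (x (nk k)) (y (nk k))) x0 (W alpha k)) (W alpha (S k))) by (left; auto).
    assert (Hq : In (y (nk k), tval X d (Lk (S k)) (x (nk k)) (y (nk k))
               (alpha k * d (x (nk k)) (y (nk k))) x0 (W alpha k) - alpha k * d (x (nk k)) (y (nk k))) (W alpha (S k))) by (right; left; auto).
    rewrite (Fext_val alpha ha _ _ _ Hp), (Fext_val alpha ha _ _ _ Hq).
    pose proof (r_pos (nk k)). field. lra.
Qed.

End Main.

Theorem theorem4p4 (X : Type) (d : X -> X -> R) (x0 : X)
    (hd : is_metric d) (x y : nat -> X)
    (hxy : forall n, x n <> y n)
    (hlim : Un_cv (fun n => d (x n) (y n)) 0)
    (eps : R) (heps : 0 < eps < 1) :
  exists nk : nat -> nat,
    (forall k, (nk k < nk (S k))%nat) /\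
    lip_interpolating d x0 (fun k => x (nk k)) (fun k => y (nk k)) /\
    exists c : R,
      is_lip_interp_const d x0 (fun k => x (nk k)) (fun k => y (nk k)) c /\
      c <= 1 / (1 - eps).
Proof.
  set (n := nk X d hd x0 x y hlim eps heps).
  pose proof (admissible_Lf X d hd x0 x y hxy hlim eps heps) as Hadm.
  fold n in Hadm.
  exists n. split; [|split].
  - intros k. apply nk_mono.
  - intros alpha [M HM].
    set (M' := Rmax M 1).
    assert (hM' : 1 <= M') by apply Rmax_r.
    destruct Hadm as [_ Hadm].
    destruct (Hadm (fun k => alpha k / M')) as [F [[F0 [L HL]] [_ HT]]].
    { intros k. unfold Rdiv. rewrite Rabs_mult, Rabs_inv, (Rabs_pos_eq M') by lra.
      apply div_le; [lra|]. pose proof (HM k). pose proof (Rmax_l M 1). fold M' in H0. lra. }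
    exists (fun z => M' * F z). split; [split|].
    + rewrite F0. ring.
    + exists (M' * L). intros a b hab. specialize (HL a b hab).
      replace (M' * F a - M' * F b) with (M' * (F a - F b)) by ring.
      rewrite Rabs_mult, (Rabs_pos_eq M') by lra. unfold Rdiv in *.
      rewrite Rmult_assoc. apply Rmult_le_compat_l; lra.
    + intros k. specialize (HT k). unfold Tcoord in *.
      replace (alpha k) with (M' * (alpha k / M')) by (field; lra). rewrite <- HT.
      unfold Rdiv. ring.
  - set (E := interp_admissible d x0 (fun k => x (n k)) (fun k => y (n k))).
    destruct (glb_real E 1 (Lf eps) (fun s Hs => proj1 Hs) Hadm) as [G1 G2].
    exists (real (Glb_Rbar E)). split; [split|].
    + exact G1.
    + exact G2.
    + apply G1. exact Hadm.
Qed.
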